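(* Let $k\in\frac12\mathbb{Z}_{>0}$. The set of monomials \[ \prod_{a=1}^n\phi_a^{p_a}(\phi_a^* )^{d_a}\omega_a^{v_a}\qquad(\text{factors in the order } a=1,\dots,n), \] with $p_a,d_a\in\{0,1\}$ and $v_a\in\{0,1,\dots,2k-1\}$, is a $\mathbb{k}$-basis of $\mathrm{Cl}_q(n,k)$.
   Context: Let $\mathbb{k}$ be a field of characteristic different from $2$, $q\in\mathbb{k}^\times$, $n$ a positive integer and $k\in\frac12\mathbb{Z}_{>0}$ (so $2k$ is a positive integer). Here $\mathrm{Cl}_q(n,k)$ is the unital associative $\mathbb{k}$-algebra generated by $\omega_a,\phi_a,\phi_a^*$ ($a=1,\dots,n$) subject to, for all $a,b$: $\omega_a\omega_b=\omega_b\omega_a$; $\omega_a^{4k}=(1+q^{-2k})\omega_a^{2k}-q^{-2k}$; $\omega_a\phi_b=q^{\delta_{ab}}\phi_b\omega_a$; $\omega_a\phi_b^*=q^{-\delta_{ab}}\phi_b^*\omega_a$; $\phi_a\phi_b+\phi_b\phi_a=0$; $\phi_a^*\phi_b^*+\phi_b^*\phi_a^*=0$; $\phi_a\phi_a^*+\phi_a^*\phi_a=1$; $\phi_a\phi_a^*+q^{-2k}\phi_a^*\phi_a=\omega_a^{2k}$; $\phi_a\phi_b^*+\phi_b^*\phi_a=0$ if $a\neq b$. (For integer $k$ this is a presentation of the algebra with generators $\psi_a,\psi_a^*,\omega_a^{\pm1}$ and relations $\omega_a\psi_b=q^{\delta_{ab}}\psi_b\omega_a$, $\omega_a\psi_b^*=q^{-\delta_{ab}}\psi_b^*\omega_a$,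 $\psi$'s and $\psi^*$'s pairwise anticommuting except $\psi_a\psi_a^*+q^{\pm k}\psi_a^*\psi_a=\omega_a^{\mp k}$, via $\phi_a=\psi_a$, $\phi_a^*=\psi_a^*\omega_a^k$.) *)

(* Defs.v *)
(* The algebra Cl_q(n,k) is presented by generators and
   relations; we realise it as the free associative K-algebra on the
   generators (formal finite K-linear combinations of words, compared
   coefficientwise) modulo the two-sided ideal generated by the relations. *)
From HB Require Import structures.
From mathcomp Require Import all_boot all_order all_algebra.
Set Implicit Arguments. Unset Strict Implicit. Unset Printing Implicit Defensive.
Import Order.TTheory GRing.Theory Num.Theory.
Local Open Scope ring_scope.

(* Generators omega_a, phi_a, phi*_a, a : 'I_n (index a is 0-based). *)
Inductive gen (n : nat) := Om of 'I_n | Ph of 'I_n | Ps of 'I_n.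

Definition gen_enc n (g : gen n) : 'I_n + 'I_n + 'I_n :=
  match g with Om a => inl (inl a) | Ph a => inl (inr a) | Ps a => inr a end.
Definition gen_dec n (x : 'I_n + 'I_n + 'I_n) : gen n :=
  match x with inl (inl a) => Om a | inl (inr a) => Ph a | inr a => Ps a end.
Lemma gen_encK n : cancel (@gen_enc n) (@gen_dec n).
Proof. by case. Qed.
HB.instance Definition _ n := Equality.copy (gen n) (can_type (@gen_encK n)).

Section FreeAlg.
Variables (K : fieldType) (n : nat).

Definition word := seq (gen n).
Definition fpoly := seq (K * word).

Definition fcoef (p : fpoly) (w : word) : K :=
  \sum_(x <- p) (if x.2 == w then x.1 else 0).

Definition fscale (c : K) (p : fpoly) : fpoly := [seq (c * x.1, x.2) | x <- p].
Definition fadd (p r : fpoly) : fpoly := p ++ r.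
Definition fsub (p r : fpoly) : fpoly := p ++ fscale (-1) r.
Definition fsandwich (u : word) (p : fpoly) (v : word) : fpoly :=
  [seq (x.1, u ++ x.2 ++ v) | x <- p].
Definition fmono (w : word) : fpoly := [:: (1, w)].
Definition fone : fpoly := fmono [::].

Definition feq (p r : fpoly) : Prop := forall w, fcoef p w = fcoef r w.

Definition in_ideal (rel : fpoly -> Prop) (p : fpoly) : Prop :=
  exists s : seq (K * word * fpoly * word),
    (forall t, t \in s -> rel t.1.2) /\
    feq p (flatten [seq fscale t.1.1.1 (fsandwich t.1.1.2 t.1.2 t.2) | t <- s]).
End FreeAlg.

Section Clq.
Variables (K : fieldType) (q : K) (n m : nat).
(* m stands for 2k (a positive integer). *)

Local Notation word := (word n).
Local Notation fpoly := (fpoly K n).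
Local Notation fmo := (@fmono K n).
Local Notation fon := (@fone K n).

Definition w2 (x y : gen n) : word := [:: x; y].
Definition Omp (a : 'I_n) (e : nat) : word := nseq e (Om a).

(* Defining relations of Cl_q(n,k), each written as "lhs - rhs". *)
Definition Clq_rel (r : fpoly) : Prop :=
  exists a b : 'I_n,
     r = fsub (fmo (w2 (Om a) (Om b))) (fmo (w2 (Om b) (Om a)))
  \/ r = fsub (fmo (Omp a (2 * m)))
              (fadd (fscale (1 + q ^- m) (fmo (Omp a m))) (fscale (- q ^- m) fon))
  \/ r = fsub (fmo (w2 (Om a) (Ph b)))
              (fscale (if a == b then q else 1) (fmo (w2 (Ph b) (Om a))))
  \/ r = fsub (fmo (w2 (Om a) (Ps b)))
              (fscale (if a == b then q^-1 else 1) (fmo (w2 (Ps b) (Om a))))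
  \/ r = fadd (fmo (w2 (Ph a) (Ph b))) (fmo (w2 (Ph b) (Ph a)))
  \/ r = fadd (fmo (w2 (Ps a) (Ps b))) (fmo (w2 (Ps b) (Ps a)))
  \/ r = fsub (fadd (fmo (w2 (Ph a) (Ps a))) (fmo (w2 (Ps a) (Ph a)))) fon
  \/ r = fsub (fadd (fmo (w2 (Ph a) (Ps a)))
                    (fscale (q ^- m) (fmo (w2 (Ps a) (Ph a)))))
              (fmo (Omp a m))
  \/ (a != b /\ r = fadd (fmo (w2 (Ph a) (Ps b))) (fmo (w2 (Ps b) (Ph a)))).

Definition Clq_ideal (p : fpoly) : Prop := in_ideal Clq_rel p.

(* Index of a PBW monomial: for each a, (p_a, d_a, v_a) with p_a,d_a in {0,1}
   and v_a in {0,...,m-1}. *)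
Definition pbw_index := {ffun 'I_n -> bool * bool * 'I_m}.

Definition pbw_word (i : pbw_index) : word :=
  flatten [seq nseq (i a).1.1 (Ph a) ++ nseq (i a).1.2 (Ps a) ++ Omp a (i a).2
          | a <- enum 'I_n].

Definition pbw_comb (c : {ffun pbw_index -> K}) : fpoly :=
  flatten [seq fscale (c i) (fmo (pbw_word i)) | i <- enum pbw_index].

Definition pbw_is_basis : Prop :=
  (forall f : fpoly, exists c : {ffun pbw_index -> K},
      Clq_ideal (fsub f (pbw_comb c))) /\
  (forall c : {ffun pbw_index -> K},
      Clq_ideal (pbw_comb c) -> forall i, c i = 0).
End Clq.

(* Main.v *)
Require Import Defs.
From HB Require Import structures.
From mathcomp Require Import all_boot all_order all_algebra.
From mathcomp Require Import ring.
Set Implicit Arguments. Unset Strict Implicit. Unset Printing Implicit Defensive.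
Import Order.TTheory GRing.Theory Num.Theory.
Local Open Scope ring_scope.

Section FP.
Variables (K : fieldType) (n : nat).
Local Notation word := (word n).
Local Notation fpoly := (fpoly K n).

Lemma fcoef_nil w : fcoef ([::] : fpoly) w = 0.
Proof. by rewrite /fcoef big_nil. Qed.
Lemma fcoef_cons (x : K * word) p w :
  fcoef (x :: p) w = (if x.2 == w then x.1 else 0) + fcoef p w.
Proof. by rewrite /fcoef big_cons. Qed.
Lemma fcoef_cat (p r : fpoly) w : fcoef (p ++ r) w = fcoef p w + fcoef r w.
Proof. by rewrite /fcoef big_cat. Qed.
Lemma fcoef_scale c (p : fpoly) w : fcoef (fscale c p) w = c * fcoef p w.
Proof.
rewrite /fcoef /fscale big_map mulr_sumr; apply: eq_bigr => x _ /=.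
by case: ifP; rewrite ?mulr0.
Qed.
Lemma fcoef_mono (w0 w : word) : fcoef (fmono K w0) w = if w0 == w then 1 else 0.
Proof. by rewrite fcoef_cons fcoef_nil addr0. Qed.
Lemma fcoef_add (p r : fpoly) w : fcoef (fadd p r) w = fcoef p w + fcoef r w.
Proof. exact: fcoef_cat. Qed.
Lemma fcoef_sub (p r : fpoly) w : fcoef (fsub p r) w = fcoef p w - fcoef r w.
Proof. by rewrite /fsub fcoef_cat fcoef_scale mulN1r. Qed.
Lemma fcoef_one (w : word) : fcoef (fone K n) w = if [::] == w then 1 else 0.
Proof. exact: fcoef_mono. Qed.
Lemma fcoef_flatten (L : seq fpoly) w : fcoef (flatten L) w = \sum_(l <- L) fcoef l w.
Proof.
elim: L => [|l L IH] /=; first by rewrite fcoef_nil big_nil.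
by rewrite fcoef_cat IH big_cons.
Qed.

Definition lin (F : word -> K) (p : fpoly) := \sum_(x <- p) x.1 * F x.2.

Lemma lin_support (F : word -> K) (p : fpoly) (s : seq word) :
  uniq s -> (forall x, x \in p -> x.2 \in s) ->
  lin F p = \sum_(w <- s) fcoef p w * F w.
Proof.
move=> us; elim: p => [|x p IH] sub.
  by rewrite /lin big_nil big1 // => w _; rewrite fcoef_nil mul0r.
rewrite /lin big_cons -/(lin F p) IH; last by move=> y yp; apply: sub; rewrite inE yp orbT.
have xs : x.2 \in s by apply: sub; rewrite inE eqxx.
under [RHS]eq_bigr do rewrite fcoef_cons mulrDl.
rewrite big_split /=; congr (_ + _).
rewrite (bigD1_seq x.2) //= eqxx big1 ?addr0 // => w /negbTE nw.
by rewrite eq_sym nw mul0r.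
Qed.

Lemma feq_lin (F : word -> K) (p r : fpoly) : feq p r -> lin F p = lin F r.
Proof.
move=> e; pose s := undup (map snd (p ++ r)).
have us : uniq s by apply: undup_uniq.
have hp : forall x, x \in p -> x.2 \in s.
  by move=> x xr; rewrite mem_undup map_f // mem_cat xr.
have hr : forall x, x \in r -> x.2 \in s.
  by move=> x xr; rewrite mem_undup map_f // mem_cat xr orbT.
rewrite (lin_support F us hp) (lin_support F us hr).
by apply: eq_bigr => w _; rewrite e.
Qed.

Lemma fcoef_lin (p : fpoly) w : fcoef p w = lin (fun w' => if w' == w then 1 else 0) p.
Proof. by apply: eq_bigr => x _; case: ifP; rewrite ?mulr1 ?mulr0. Qed.

Lemma lin_sandwich F u (p : fpoly) v :
  lin F (fsandwich u p v) = lin (fun w => F (u ++ w ++ v)) p.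
Proof. by rewrite /lin /fsandwich big_map. Qed.

Lemma feq_sandwich u (p r : fpoly) v : feq p r -> feq (fsandwich u p v) (fsandwich u r v).
Proof. by move=> e w; rewrite !fcoef_lin !lin_sandwich (feq_lin _ e). Qed.

Lemma feq_refl (p : fpoly) : feq p p. Proof. by []. Qed.
Lemma feq_trans (p r s : fpoly) : feq p r -> feq r s -> feq p s.
Proof. by move=> h1 h2 w; rewrite h1 h2. Qed.

End FP.

Section Ideal.
Variables (K : fieldType) (n : nat) (rel : fpoly K n -> Prop).
Local Notation word := (word n).
Local Notation fpoly := (fpoly K n).
Local Notation I := (in_ideal rel).

Lemma fcoef_cons' (x : K * word) p w :
  fcoef (x :: p) w = x.1 * (if x.2 == w then 1 else 0) + fcoef p w.
Proof. by rewrite fcoef_cons; case: ifP; rewrite ?mulr1 ?mulr0. Qed.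

Definition fcoefE := (fcoef_mono, fcoef_one, fcoef_nil, fcoef_add, fcoef_sub,
  fcoef_cat, fcoef_scale, fcoef_cons').

Lemma I_feq (p r : fpoly) : feq p r -> I r -> I p.
Proof. by move=> e [s [hs e2]]; exists s; split => // w; rewrite e e2. Qed.

Lemma I_nil : I [::].
Proof. by exists [::]. Qed.

Lemma I_add (p r : fpoly) : I p -> I r -> I (fadd p r).
Proof.
move=> [s1 [h1 e1]] [s2 [h2 e2]]; exists (s1 ++ s2); split.
  by move=> t; rewrite mem_cat => /orP [] ?; [apply: h1|apply: h2].
by move=> w; rewrite map_cat flatten_cat fcoef_add fcoef_cat e1 e2.
Qed.

Lemma I_scale c (p : fpoly) : I p -> I (fscale c p).
Proof.
move=> [s [h e]]; exists [seq (c * t.1.1.1, t.1.1.2, t.1.2, t.2) | t <- s]; split.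
  by move=> t /mapP [t' t's ->]; exact: (h t' t's).
move=> w; rewrite fcoef_scale e !fcoef_flatten !big_map mulr_sumr.
by apply: eq_bigr => t _; rewrite !fcoef_scale mulrA.
Qed.

Lemma I_sandwich u (p : fpoly) v : I p -> I (fsandwich u p v).
Proof.
move=> [s [h e]]; exists [seq (t.1.1.1, u ++ t.1.1.2, t.1.2, t.2 ++ v) | t <- s]; split.
  by move=> t /mapP [t' t's ->]; exact: (h t' t's).
apply: (feq_trans (@feq_sandwich _ _ u _ _ v e)) => w.
rewrite /fsandwich map_flatten -map_comp; congr fcoef.
rewrite -[in RHS]map_comp; congr flatten; apply: eq_map => t /=.
rewrite /fscale -!map_comp; apply: eq_map => x /=.
by rewrite !catA.
Qed.

Lemma I_rel (r : fpoly) : rel r -> I r.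
Proof.
move=> hr; exists [:: (1, [::], r, [::])]; split.
  by move=> t; rewrite inE => /eqP -> /=.
move=> w /=; rewrite cats0 fcoef_scale mul1r.
have -> : fsandwich [::] r [::] = r.
  by rewrite /fsandwich -[RHS]map_id; apply: eq_map => -[c x] /=; rewrite cats0.
by [].
Qed.

Definition cong (p r : fpoly) := I (fsub p r).

Lemma cong_feq (p p' r r' : fpoly) : feq p p' -> feq r r' -> cong p' r' -> cong p r.
Proof. by move=> e1 e2; apply: I_feq => w; rewrite !fcoef_sub e1 e2. Qed.

Lemma cong_refl (p : fpoly) : cong p p.
Proof. by apply: I_feq I_nil => w; rewrite !fcoefE subrr. Qed.

Lemma cong_feq_refl (p r : fpoly) : feq p r -> cong p r.
Proof. by move=> e; apply: (cong_feq e (feq_refl r)); apply: cong_refl. Qed.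

Lemma cong_sym (p r : fpoly) : cong p r -> cong r p.
Proof. by move/(I_scale (-1)); apply: I_feq => w; rewrite !fcoefE; ring. Qed.

Lemma cong_trans (p r s : fpoly) : cong p r -> cong r s -> cong p s.
Proof. by move=> h1 h2; apply: I_feq (I_add h1 h2) => w; rewrite !fcoefE; ring. Qed.

Lemma cong_add (p r p' r' : fpoly) : cong p r -> cong p' r' -> cong (fadd p p') (fadd r r').
Proof. by move=> h1 h2; apply: I_feq (I_add h1 h2) => w; rewrite !fcoefE; ring. Qed.

Lemma cong_scale c (p r : fpoly) : cong p r -> cong (fscale c p) (fscale c r).
Proof. by move/(I_scale c); apply: I_feq => w; rewrite !fcoefE; ring. Qed.

Lemma cong_sandwich u v (p r : fpoly) : cong p r -> cong (fsandwich u p v) (fsandwich u r v).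
Proof.
move/(I_sandwich u v); apply: I_feq => w.
by rewrite /fsub /fsandwich /fscale map_cat -!map_comp.
Qed.

Definition SpanB (T : Type) (B : T -> word) (P : fpoly) :=
  exists l : seq (K * T), cong P [seq (x.1, B x.2) | x <- l].

Section SpanB.
Variables (T : Type) (B : T -> word).
Lemma SpanB_cong P P' : cong P P' -> SpanB B P' -> SpanB B P.
Proof. by move=> h [l hl]; exists l; apply: cong_trans hl. Qed.
Lemma SpanB_feq P P' : feq P P' -> SpanB B P' -> SpanB B P.
Proof. by move/cong_feq_refl; apply: SpanB_cong. Qed.
Lemma SpanB_base y : SpanB B (fmono K (B y)).
Proof. by exists [:: (1, y)]; apply: cong_refl. Qed.
Lemma SpanB_nil : SpanB B [::].
Proof. by exists [::]; apply: cong_refl. Qed.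
Lemma SpanB_add P P' : SpanB B P -> SpanB B P' -> SpanB B (fadd P P').
Proof.
move=> [l hl] [l' hl']; exists (l ++ l'); rewrite map_cat.
exact: cong_add.
Qed.
Lemma SpanB_scale c P : SpanB B P -> SpanB B (fscale c P).
Proof.
move=> [l hl]; exists [seq (c * x.1, x.2) | x <- l].
by move/(cong_scale c): hl; rewrite /fscale -!map_comp.
Qed.
Lemma SpanB_sub P P' : SpanB B P -> SpanB B P' -> SpanB B (fsub P P').
Proof. by move=> h h'; apply: SpanB_add => //; apply: SpanB_scale. Qed.

Lemma SpanB_lmul g : (forall y, SpanB B (fmono K (g :: B y))) ->
  forall P, SpanB B P -> SpanB B (fsandwich [:: g] P [::]).
Proof.
move=> hg P [l hl]; apply: SpanB_cong (cong_sandwich _ _ hl) _.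
elim: l {hl} => [|x l IH] /=; first exact: SpanB_nil.
have -> : (x.1, g :: B x.2 ++ [::]) :: fsandwich [:: g] [seq (x0.1, B x0.2) | x0 <- l] [::]
  = fadd [:: (x.1, g :: B x.2 ++ [::])] (fsandwich [:: g] [seq (x0.1, B x0.2) | x0 <- l] [::]) by [].
apply: SpanB_add => //; rewrite cats0.
apply: (SpanB_feq (P' := fscale x.1 (fmono K (g :: B x.2)))); last exact: SpanB_scale.
by move=> w; rewrite !fcoefE; case: ifP => _; ring.
Qed.
End SpanB.

Lemma SpanB_ctx (T1 T2 : Type) (B1 : T1 -> word) (B2 : T2 -> word) (f : T1 -> T2) u v P :
  (forall y, B2 (f y) = u ++ B1 y ++ v) -> SpanB B1 P -> SpanB B2 (fsandwich u P v).
Proof.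
move=> hf [l hl]; exists [seq (x.1, f x.2) | x <- l].
move/(cong_sandwich u v): hl; rewrite /fsandwich -!map_comp.
by congr cong; apply: eq_map => x /=; rewrite hf.
Qed.

End Ideal.

Ltac fc := let w := fresh "w" in move=> w; rewrite !fcoefE /=; ring.

Section Span.
Variables (K : fieldType) (q : K) (n m : nat).
Variables (hchar : (2%:R : K) != 0) (hq : q != 0) (hm : (0 < m)%N).
Local Notation word := (word n).
Local Notation fpoly := (fpoly K n).
Local Notation fmo := (fmono K).
Local Notation I := (in_ideal (Clq_rel q m)).
Local Notation cg := (cong (Clq_rel q m)).
Local Notation SB := (SpanB (Clq_rel q m)).

Definition gsite (g : gen n) : 'I_n := match g with Om a | Ph a | Ps a => a end.
Definition blk (a : 'I_n) (y : bool * bool * 'I_m) : word :=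
  nseq y.1.1 (Ph a) ++ nseq y.1.2 (Ps a) ++ Omp a y.2.

Lemma R1 (a b : 'I_n) : cg (fmo [:: Om a; Om b]) (fmo [:: Om b; Om a]).
Proof. by apply: I_rel; exists a, b; left. Qed.
Lemma R3 (a b : 'I_n) : cg (fmo [:: Om a; Ph b]) (fscale (if a == b then q else 1) (fmo [:: Ph b; Om a])).
Proof. by apply: I_rel; exists a, b; do 2 right; left. Qed.
Lemma R4 (a b : 'I_n) : cg (fmo [:: Om a; Ps b]) (fscale (if a == b then q^-1 else 1) (fmo [:: Ps b; Om a])).
Proof. by apply: I_rel; exists a, b; do 3 right; left. Qed.
Lemma R5 (a b : 'I_n) : I (fadd (fmo [:: Ph a; Ph b]) (fmo [:: Ph b; Ph a])).
Proof. by apply: I_rel; exists a, b; do 4 right; left. Qed.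
Lemma R6 (a b : 'I_n) : I (fadd (fmo [:: Ps a; Ps b]) (fmo [:: Ps b; Ps a])).
Proof. by apply: I_rel; exists a, b; do 5 right; left. Qed.
Lemma R7 (a : 'I_n) : cg (fadd (fmo [:: Ph a; Ps a]) (fmo [:: Ps a; Ph a])) (fone K n).
Proof. by apply: I_rel; exists a, a; do 6 right; left. Qed.
Lemma R8 (a : 'I_n) : cg (fadd (fmo [:: Ph a; Ps a]) (fscale (q ^- m) (fmo [:: Ps a; Ph a]))) (fmo (Omp a m)).
Proof. by apply: I_rel; exists a, a; do 7 right; left. Qed.
Lemma R9 (a b : 'I_n) : a != b -> I (fadd (fmo [:: Ph a; Ps b]) (fmo [:: Ps b; Ph a])).
Proof. by move=> hab; apply: I_rel; exists a, b; do 8 right; split. Qed.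

Lemma swap (g h : gen n) : gsite g != gsite h ->
  exists e, cg (fmo [:: g; h]) (fscale e (fmo [:: h; g])).
Proof.
case: g => a; case: h => b /= hab; have hba : (b == a) = false by rewrite eq_sym (negbTE hab).
- by exists 1; apply: I_feq (R1 a b); fc.
- by exists 1; apply: I_feq (R3 a b); rewrite (negbTE hab); fc.
- by exists 1; apply: I_feq (R4 a b); rewrite (negbTE hab); fc.
- by exists 1; apply: I_feq (I_scale (-1) (R3 b a)); rewrite hba; fc.
- by exists (-1); apply: I_feq (R5 a b); fc.
- by exists (-1); apply: I_feq (R9 hab); fc.
- by exists 1; apply: I_feq (I_scale (-1) (R4 b a)); rewrite hba; fc.
- by exists (-1); apply: I_feq (R9 (negbT hba)); fc.
- by exists (-1); apply: I_feq (R6 a b); fc.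
Qed.

Lemma comm_word (g : gen n) (u t : word) : (forall h, h \in u -> gsite h != gsite g) ->
  exists e, cg (fmo (g :: u ++ t)) (fscale e (fmo (u ++ g :: t))).
Proof.
elim: u => [|h u IH] hu /=.
  by exists 1; apply: cong_feq_refl; fc.
have hgh : gsite g != gsite h by rewrite eq_sym hu ?mem_head.
have [e1 h1] := swap hgh.
have hu' : forall h', h' \in u -> gsite h' != gsite g.
  by move=> h' hh'; apply: hu; rewrite inE hh' orbT.
have [e2 h2] := IH hu'.
exists (e1 * e2).
have c1 : cg (fmo (g :: h :: u ++ t)) (fscale e1 (fmo (h :: g :: u ++ t))).
  exact: (cong_sandwich [::] (u ++ t) h1).
have c2 : cg (fmo (h :: g :: u ++ t)) (fscale e2 (fmo (h :: u ++ g :: t))).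
  by move: (cong_sandwich [:: h] [::] h2); rewrite /fsandwich /fscale /fmono /= !cats0.
apply: cong_trans c1 _; apply: cong_trans (cong_scale e1 c2) _.
by apply: cong_feq_refl; fc.
Qed.

Lemma L_PhPh (a : 'I_n) u v : cg (fmo (u ++ [:: Ph a; Ph a] ++ v)) [::].
Proof.
apply: (cong_sandwich u v (p := fmo [:: Ph a; Ph a]) (r := [::])).
apply: I_feq (I_scale (2%:R^-1) (R5 a a)) => w; rewrite !fcoefE /=.
by field.
Qed.
Lemma L_PsPs (a : 'I_n) u v : cg (fmo (u ++ [:: Ps a; Ps a] ++ v)) [::].
Proof.
apply: (cong_sandwich u v (p := fmo [:: Ps a; Ps a]) (r := [::])).
apply: I_feq (I_scale (2%:R^-1) (R6 a a)) => w; rewrite !fcoefE /=.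
by field.
Qed.
Lemma L_PsPh (a : 'I_n) u v : cg (fmo (u ++ [:: Ps a; Ph a] ++ v))
  (fsub (fmo (u ++ v)) (fmo (u ++ [:: Ph a; Ps a] ++ v))).
Proof.
apply: (cong_sandwich u v (p := fmo [:: Ps a; Ph a]) (r := fsub (fone K n) (fmo [:: Ph a; Ps a]))).
by apply: I_feq (R7 a); fc.
Qed.
Lemma L_OmPh (a : 'I_n) u v : cg (fmo (u ++ [:: Om a; Ph a] ++ v))
  (fscale q (fmo (u ++ [:: Ph a; Om a] ++ v))).
Proof.
apply: (cong_sandwich u v (p := fmo [:: Om a; Ph a]) (r := fscale q (fmo [:: Ph a; Om a]))).
by have := R3 a a; rewrite eqxx.
Qed.
Lemma L_OmPs (a : 'I_n) u v : cg (fmo (u ++ [:: Om a; Ps a] ++ v))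
  (fscale q^-1 (fmo (u ++ [:: Ps a; Om a] ++ v))).
Proof.
apply: (cong_sandwich u v (p := fmo [:: Om a; Ps a]) (r := fscale q^-1 (fmo [:: Ps a; Om a]))).
by have := R4 a a; rewrite eqxx.
Qed.
Lemma L_Omm (a : 'I_n) u v : cg (fmo (u ++ Omp a m ++ v))
  (fsub (fmo (u ++ v)) (fscale (1 - q ^- m) (fmo (u ++ [:: Ps a; Ph a] ++ v)))).
Proof.
apply: (cong_sandwich u v (p := fmo (Omp a m))
   (r := fsub (fone K n) (fscale (1 - q ^- m) (fmo [:: Ps a; Ph a])))).
by apply: I_feq (I_add (R7 a) (I_scale (-1) (R8 a))); fc.
Qed.

Lemma base_blk a y : SB (blk a) (fmo (blk a y)).
Proof. exact: SpanB_base. Qed.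

Lemma loc_Ph a y : SB (blk a) (fmo (Ph a :: blk a y)).
Proof.
case: y => [[[] d] v].
  exact: (SpanB_cong (L_PhPh a [::] (nseq d (Ps a) ++ Omp a v)) (SpanB_nil _ _)).
exact: (base_blk a (true, d, v)).
Qed.

Lemma loc_Ps a y : SB (blk a) (fmo (Ps a :: blk a y)).
Proof.
case: y => [[[] [] v]].
- apply: (SpanB_cong (L_PsPh a [::] (Ps a :: Omp a v))).
  apply: SpanB_sub; first exact: (base_blk a (false, true, v)).
  exact: (SpanB_cong (L_PsPs a [:: Ph a] (Omp a v)) (SpanB_nil _ _)).
- apply: (SpanB_cong (L_PsPh a [::] (Omp a v))).
  apply: SpanB_sub; first exact: (base_blk a (false, false, v)).
  exact: (base_blk a (true, true, v)).
- exact: (SpanB_cong (L_PsPs a [::] (Omp a v)) (SpanB_nil _ _)).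
- exact: (base_blk a (false, true, v)).
Qed.

Lemma span_PP a (w : word) : all (fun g => (g == Ph a) || (g == Ps a)) w ->
  SB (blk a) (fmo w).
Proof.
elim: w => [|g w IH] /=.
  by move=> _; exact: (base_blk a (false, false, Ordinal hm)).
case/andP => /orP [] /eqP -> /IH hw.
- apply: (SpanB_feq (P' := fsandwich [:: Ph a] (fmo w) [::])).
    by move=> w'; rewrite /fsandwich /= cats0.
  exact: (SpanB_lmul (loc_Ph a) hw).
- apply: (SpanB_feq (P' := fsandwich [:: Ps a] (fmo w) [::])).
    by move=> w'; rewrite /fsandwich /= cats0.
  exact: (SpanB_lmul (loc_Ps a) hw).
Qed.

Lemma loc_Om2 a (p d : bool) (v : nat) : (v <= m)%N ->
  SB (blk a) (fmo (nseq p (Ph a) ++ nseq d (Ps a) ++ Omp a v)).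
Proof.
case: (ltnP v m) => [hv _|h1 h2].
  exact: (base_blk a (p, d, Ordinal hv)).
have -> : v = m by apply/eqP; rewrite eqn_leq h1 h2.
have := L_Omm a (nseq p (Ph a) ++ nseq d (Ps a)) [::]; rewrite !cats0 -!catA => h.
apply: (SpanB_cong h); apply: SpanB_sub; last apply: SpanB_scale; apply: span_PP;
  by rewrite ?all_cat !all_nseq /= !eqxx ?orbT.
Qed.

Lemma loc_Om a y : SB (blk a) (fmo (Om a :: blk a y)).
Proof.
case: y => [[p d] v].
have [e he] : exists e, cg (fmo (Om a :: blk a (p, d, v)))
   (fscale e (fmo (nseq p (Ph a) ++ nseq d (Ps a) ++ Omp a v.+1))).
  case: p; case: d; rewrite /blk /=.
  - exists (q * q^-1).
    apply: cong_trans (L_OmPh a [::] (Ps a :: Omp a v)) _.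
    apply: cong_trans (cong_scale q (L_OmPs a [:: Ph a] (Omp a v))) _.
    by apply: cong_feq_refl; fc.
  - by exists q; exact: (L_OmPh a [::] (Omp a v)).
  - by exists q^-1; exact: (L_OmPs a [::] (Omp a v)).
  - by exists 1; apply: cong_feq_refl; fc.
apply: (SpanB_cong he); apply: SpanB_scale; apply: loc_Om2.
exact: ltn_ord.
Qed.

Lemma loc (g : gen n) y : SB (blk (gsite g)) (fmo (g :: blk (gsite g) y)).
Proof. case: g => a; [exact: loc_Om | exact: loc_Ph | exact: loc_Ps]. Qed.

Local Notation pidx := (pbw_index n m).

Definition upd (i : pidx) (a : 'I_n) (y : bool * bool * 'I_m) : pidx :=
  [ffun c => if c == a then y else i c].

Lemma upd_id i a : upd i a (i a) = i.
Proof. by apply/ffunP => c; rewrite ffunE; case: eqP => // ->. Qed.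

Lemma pbw_wordE (i : pidx) : pbw_word i = flatten [seq blk c (i c) | c <- enum 'I_n].
Proof. by []. Qed.

Lemma pbw_split (i : pidx) (a : 'I_n) : exists L R,
  (forall y, pbw_word (upd i a y) = L ++ blk a y ++ R) /\
  (forall h, h \in L -> gsite h != a).
Proof.
suff : forall s, uniq s -> a \in s -> exists L R,
  (forall y, flatten [seq blk c (upd i a y c) | c <- s] = L ++ blk a y ++ R) /\
  (forall h, h \in L -> gsite h != a).
  by move/(_ (enum 'I_n) (enum_uniq _)); rewrite mem_enum => /(_ isT).
move=> s us /splitPr sp; case: sp us => s1 s2.
rewrite cat_uniq /= => /and4P [_ /norP [ha1 _] ha2' _].
exists (flatten [seq blk c (i c) | c <- s1]), (flatten [seq blk c (i c) | c <- s2]).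
split.
  move=> y; rewrite map_cat flatten_cat /= ffunE eqxx; congr (flatten _ ++ _ ++ flatten _).
    apply/eq_in_map => c cs1; rewrite ffunE; case: eqP => // eca.
    by move: ha1; rewrite -eca cs1.
  apply/eq_in_map => c cs2; rewrite ffunE; case: eqP => // eca.
  by move: ha2'; rewrite -eca cs2.
move=> h /flattenP [w /mapP [c cs1 ->]].
rewrite /blk !mem_cat !mem_nseq => hh.
have -> : gsite h = c by case/orP: hh => [/andP [_ /eqP ->] | /orP [] /andP [_ /eqP ->]].
by apply: contraNneq ha1 => <-.
Qed.

Lemma key (g : gen n) (i : pidx) : SB (@pbw_word n m) (fmo (g :: pbw_word i)).
Proof.
have [L [R [hLR hL]]] := pbw_split i (gsite g).
have E : pbw_word i = L ++ blk (gsite g) (i (gsite g)) ++ R by rewrite -hLR upd_id.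
rewrite E; have [e he] := comm_word (blk (gsite g) (i (gsite g)) ++ R) hL.
apply: (SpanB_cong he); apply: SpanB_scale.
exact: (SpanB_ctx (f := upd i (gsite g)) hLR (loc g (i (gsite g)))).
Qed.

Definition i0 : pidx := [ffun _ => (false, false, Ordinal hm)].

Lemma pbw_i0 : pbw_word i0 = [::].
Proof.
rewrite pbw_wordE; elim: (enum 'I_n) => //= c s ->.
by rewrite ffunE.
Qed.

Lemma span_word (w : word) : SB (@pbw_word n m) (fmo w).
Proof.
elim: w => [|g w IH]; first by rewrite -pbw_i0; apply: SpanB_base.
apply: (SpanB_feq (P' := fsandwich [:: g] (fmo w) [::])).
  by move=> w'; rewrite /fsandwich /= cats0.
exact: (SpanB_lmul (key g) IH).
Qed.

Lemma span_all (f : fpoly) : SB (@pbw_word n m) f.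
Proof.
elim: f => [|[k w] f IH]; first exact: SpanB_nil.
apply: (SpanB_feq (P' := fadd (fscale k (fmo w)) f)); first by fc.
by apply: SpanB_add => //; apply: SpanB_scale; apply: span_word.
Qed.

Lemma SpanB_comb (P : fpoly) : SB (@pbw_word n m) P ->
  exists c : {ffun pidx -> K}, cg P (pbw_comb c).
Proof.
case=> l hl; exists [ffun i => \sum_(x <- l) (if x.2 == i then x.1 else 0)].
apply: (cong_trans hl); apply: cong_feq_refl => w.
rewrite /pbw_comb fcoef_flatten big_map.
under [RHS]eq_bigr => i _ do rewrite fcoef_scale fcoef_mono ffunE mulr_suml.
rewrite /fcoef big_map /= exchange_big /=; apply: eq_bigr => x _.
rewrite (bigD1_seq x.2) ?mem_enum ?enum_uniq //= eqxx big1 ?addr0.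
  by case: ifP; rewrite ?mulr1 ?mulr0.
by move=> i /negbTE; rewrite eq_sym => ->; rewrite mul0r.
Qed.

Lemma spanning (f : fpoly) : exists c : {ffun pidx -> K}, Clq_ideal q m (fsub f (pbw_comb c)).
Proof. exact: SpanB_comb (span_all f). Qed.

End Span.

Section Rep.
Variables (K : fieldType) (q : K) (n m : nat).
Variables (hq : q != 0) (hm : (0 < m)%N).
Local Notation word := (word n).
Local Notation fpoly := (fpoly K n).
Local Notation fmo := (fmono K).

Definition BB := {ffun 'I_n -> bool * 'I_m}.
Implicit Types (b : BB) (a c : 'I_n) (t : bool * 'I_m) (x : BB -> K)
  (w u v : word) (p r : fpoly) (j : 'I_m) (k l : nat).

Definition shift (j : 'I_m) (k : nat) : 'I_m := Ordinal (ltn_pmod (j + k) hm).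
Definition updB (b : BB) (a : 'I_n) (t : bool * 'I_m) : BB :=
  [ffun c => if c == a then t else b c].
Definition sg (b : BB) (a : 'I_n) : K :=
  \prod_(c : 'I_n | (c < a)%N) (if (b c).1 then -1 else 1).

Definition sub (g : gen n) (b : BB) : BB :=
  match g with
  | Om a => updB b a ((b a).1, shift (b a).2 1)
  | Ph a => updB b a (true, (b a).2)
  | Ps a => updB b a (false, (b a).2)
  end.
Definition wt (g : gen n) (b : BB) : K :=
  match g with
  | Om a => if (b a).1 then q^-1 else 1
  | Ph a => if (b a).1 then 0 else sg b a
  | Ps a => if (b a).1 then sg b a else 0
  end.
Fixpoint subw (w : word) (b : BB) : BB :=
  if w is g :: w' then subw w' (sub g b) else b.
Fixpoint wtw (w : word) (b : BB) : K :=
  if w is g :: w' then wt g b * wtw w' (sub g b) else 1.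
Definition actw (w : word) (x : BB -> K) (b : BB) : K := wtw w b * x (subw w b).
Definition ev (p : fpoly) (x : BB -> K) (b : BB) : K := lin (fun w => actw w x b) p.

Lemma shift_add j k l : shift (shift j k) l = shift j (k + l).
Proof. by apply: val_inj => /=; rewrite modnDml addnA. Qed.
Lemma shift0 j : shift j 0 = j.
Proof. by apply: val_inj => /=; rewrite addn0 modn_small. Qed.
Lemma shiftm j : shift j m = j.
Proof. by apply: val_inj => /=; rewrite modnDr modn_small. Qed.

Lemma updB_at b a t : updB b a t a = t.
Proof. by rewrite ffunE eqxx. Qed.
Lemma updB_ne b a t c : c != a -> updB b a t c = b c.
Proof. by move/negbTE => h; rewrite ffunE h. Qed.
Lemma updB_same b a t t' : updB (updB b a t) a t' = updB b a t'.
Proof. by apply/ffunP => c; rewrite !ffunE; case: eqP. Qed.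
Lemma updB_comm b a c t t' : a != c -> updB (updB b a t) c t' = updB (updB b c t') a t.
Proof.
move=> ac; apply/ffunP => x; rewrite !ffunE.
by case: eqP => [xc|xc]; case: eqP => [xa|xa] //; move: ac; rewrite -xa -xc eqxx.
Qed.
Lemma updB_id b a : updB b a (b a) = b.
Proof. by apply/ffunP => c; rewrite ffunE; case: eqP => // ->. Qed.

Lemma sg_upd_s b c t a : t.1 = (b c).1 -> sg (updB b c t) a = sg b a.
Proof.
move=> ht; apply: eq_bigr => x _; rewrite ffunE; case: eqP => // ->.
by rewrite ht.
Qed.
Lemma sg_upd_ge b c t a : ~~ (c < a)%N -> sg (updB b c t) a = sg b a.
Proof.
move=> hca; apply: eq_bigr => x hx; rewrite ffunE; case: eqP => // exc.
by move: hca; rewrite -exc hx.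
Qed.
Lemma sg_upd_flip b c t a : (c < a)%N -> t.1 = ~~ (b c).1 -> sg (updB b c t) a = - sg b a.
Proof.
move=> hca ht; rewrite /sg (bigD1 c) //= [in RHS](bigD1 c) //= updB_at ht.
rewrite -mulNr; congr (_ * _); last first.
  by apply: eq_bigr => x /andP [_ hx]; rewrite updB_ne.
by case: (b c).1 => /=; rewrite ?opprK.
Qed.
Lemma sg_sq b a : sg b a * sg b a = 1.
Proof.
rewrite /sg -big_split /= big1 // => x _.
by case: (b x).1; rewrite ?mulrNN mulr1.
Qed.
Lemma sg_neq0 b a : sg b a != 0.
Proof. by apply/eqP => h; have := sg_sq b a; rewrite h mul0r => /eqP; rewrite eq_sym oner_eq0. Qed.

Lemma subw_cat u v b : subw (u ++ v) b = subw v (subw u b).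
Proof. by elim: u b => //= g u IH b. Qed.
Lemma wtw_cat u v b : wtw (u ++ v) b = wtw u b * wtw v (subw u b).
Proof. by elim: u b => [|g u IH] b /=; rewrite ?mul1r // IH mulrA. Qed.

Lemma Om_pow a k b :
  subw (nseq k (Om a)) b = updB b a ((b a).1, shift (b a).2 k) /\
  wtw (nseq k (Om a)) b = (if (b a).1 then q^-1 else 1) ^+ k.
Proof.
elim: k b => [|k IH] b /=.
  by rewrite shift0 -surjective_pairing updB_id.
have [-> ->] := IH (updB b a ((b a).1, shift (b a).2 1)).
by rewrite updB_at updB_same shift_add /= exprS.
Qed.

Lemma ev_mono w x b : ev (fmo w) x b = actw w x b.
Proof. by rewrite /ev /lin big_cons big_nil addr0 mul1r. Qed.
Lemma ev_cat p r x b : ev (p ++ r) x b = ev p x b + ev r x b.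
Proof. by rewrite /ev /lin big_cat. Qed.
Lemma ev_scale (e : K) p x b : ev (fscale e p) x b = e * ev p x b.
Proof. by rewrite /ev /lin /fscale big_map mulr_sumr; apply: eq_bigr => y _; rewrite mulrA. Qed.
Lemma ev_add p r x b : ev (fadd p r) x b = ev p x b + ev r x b.
Proof. exact: ev_cat. Qed.
Lemma ev_sub p r x b : ev (fsub p r) x b = ev p x b - ev r x b.
Proof. by rewrite /fsub ev_cat ev_scale mulN1r. Qed.
Lemma ev_nil x b : ev [::] x b = 0.
Proof. by rewrite /ev /lin big_nil. Qed.
Lemma ev_flatten L x b : ev (flatten L) x b = \sum_(l <- L) ev l x b.
Proof. by elim: L => [|l L IH]; rewrite ?big_nil ?ev_nil //= ev_cat IH big_cons. Qed.
Lemma ev_sandwich u p v x b :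
  ev (fsandwich u p v) x b = wtw u b * ev p (actw v x) (subw u b).
Proof.
rewrite /ev lin_sandwich /lin mulr_sumr; apply: eq_bigr => y _.
by rewrite /actw !wtw_cat !subw_cat; ring.
Qed.
Lemma ev_feq p r x b : feq p r -> ev p x b = ev r x b.
Proof. exact: feq_lin. Qed.

Lemma ev_ideal (rel : fpoly -> Prop) :
  (forall r, rel r -> forall x b, ev r x b = 0) ->
  forall p, in_ideal rel p -> forall x b, ev p x b = 0.
Proof.
move=> hr p [s [hs e]] x b; rewrite (ev_feq x b e) ev_flatten big_map big1_seq //.
move=> t /andP [_ ts]; rewrite ev_scale ev_sandwich hr ?mulr0 //.
exact: hs.
Qed.

Definition odd_gen (g : gen n) := if g is Om _ then false else true.

Lemma sub_at g b c : c != gsite g -> sub g b c = b c.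
Proof. by case: g => a /= h; rewrite updB_ne. Qed.

Lemma sub_comm g h b : gsite g != gsite h -> sub g (sub h b) = sub h (sub g b).
Proof.
move=> hgh; have hhg : gsite h != gsite g by rewrite eq_sym.
have e1 : sub h b (gsite g) = b (gsite g) by rewrite sub_at.
have e2 : sub g b (gsite h) = b (gsite h) by rewrite sub_at.
move: e1 e2; case: g hgh hhg => a; case: h => c /= hac hca -> ->;
  by rewrite updB_comm.
Qed.

Lemma wt_first g b b' : (forall c, (b' c).1 = (b c).1) -> wt g b' = wt g b.
Proof.
move=> h.
have hs : forall a, sg b' a = sg b a by move=> a; apply: eq_bigr => c _; rewrite h.
by case: g => a /=; rewrite h ?hs.
Qed.

Lemma wt_subOm g c b : wt g (sub (Om c) b) = wt g b.
Proof.
apply: wt_first => x /=; rewrite ffunE; case: eqP => // ->.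
by [].
Qed.

Lemma wt_Om_other a h b : gsite h != a -> wt (Om a) (sub h b) = wt (Om a) b.
Proof. by move=> ha /=; rewrite sub_at // eq_sym. Qed.

Lemma odd_step g h b : odd_gen g -> odd_gen h -> (gsite g < gsite h)%N ->
  wt g (sub h b) = wt g b /\ wt h (sub g b) * wt g b = - (wt h b * wt g b).
Proof.
move=> og oh lt.
have ne : gsite h != gsite g by rewrite neq_ltn lt orbT.
have ne' : gsite g != gsite h by rewrite eq_sym.
split.
  have e1 : sub h b (gsite g) = b (gsite g) by rewrite sub_at.
  have e2 : sg (sub h b) (gsite g) = sg b (gsite g).
    by case: h oh ne ne' e1 lt => // c _ /= _ _ _ lt; rewrite sg_upd_ge // -leqNgt ltnW.
  by case: g og ne ne' e1 e2 lt => // a _ /= _ _ -> -> _.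
have eg : wt g b = 0 \/ (exists t, sub g b = updB b (gsite g) t /\ t.1 = ~~ (b (gsite g)).1).
  clear ne ne' lt; case: g og => // a _ /=; case hb: (b a).1; (try by left);
  by right; eexists; split; [reflexivity | rewrite /= ?hb].
case: eg => [-> | [t [-> ht]]]; first by rewrite !mulr0 oppr0.
have e1 : updB b (gsite g) t (gsite h) = b (gsite h) by rewrite updB_ne.
have e2 : sg (updB b (gsite g) t) (gsite h) = - sg b (gsite h) by rewrite sg_upd_flip.
case: h oh ne ne' e1 e2 lt => // c _ /= _ _ -> -> _;
  by case: (b c).1; rewrite ?mul0r ?oppr0 ?mulNr.
Qed.

Lemma anti g h b : odd_gen g -> odd_gen h -> gsite g != gsite h ->
  wt h b * wt g (sub h b) = - (wt g b * wt h (sub g b)).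
Proof.
move=> og oh; rewrite neq_ltn => /orP [] lt.
  have [e1 e2] := odd_step b og oh lt.
  by rewrite e1 [wt g b * _]mulrC e2 opprK.
have [e1 e2] := odd_step b oh og lt.
by rewrite e1 [wt h b * _]mulrC e2.
Qed.

Lemma actw2 g h x b : actw [:: g; h] x b = wt g b * wt h (sub g b) * x (sub h (sub g b)).
Proof. by rewrite /actw /= mulr1. Qed.
Lemma actw0 x b : actw [::] x b = x b.
Proof. by rewrite /actw /= mul1r. Qed.
Lemma updB_self b a s : (b a).1 = s -> updB b a (s, (b a).2) = b.
Proof. by move=> <-; rewrite -surjective_pairing updB_id. Qed.
Lemma shift_2m j : shift j (2 * m) = j.
Proof. by rewrite mul2n -addnn -shift_add !shiftm. Qed.

Lemma rel_ev r : Clq_rel q m r -> forall x b, ev r x b = 0.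
Proof.
case=> a [c H] x b.
case: H => [->|[->|[->|[->|[->|[->|[->|[->|[ac ->]]]]]]]]];
  rewrite ?(ev_sub, ev_add, ev_scale, ev_mono) /w2 ?actw2 ?actw0.
- rewrite !wt_subOm; case: (eqVneq a c) => [<-|ac]; first by rewrite subrr.
  by rewrite (@sub_comm (Om a) (Om c)) //; ring.
- rewrite /actw /Omp; have [s1 w1] := Om_pow a (2 * m) b; have [s2 w2] := Om_pow a m b.
  rewrite s1 w1 s2 w2 shiftm shift_2m -surjective_pairing updB_id.
  case: (b a).1; rewrite ?expr1n; last by ring.
  by rewrite -exprVn mulnC exprM; ring.
- rewrite wt_subOm; case: (eqVneq a c) => [<-|ac].
    rewrite ?eqxx.
    have -> : wt (Om a) (sub (Ph a) b) = q^-1 by rewrite /= updB_at.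
    have -> : sub (Om a) (sub (Ph a) b) = sub (Ph a) (sub (Om a) b).
      by rewrite /= !updB_at !updB_same.
    have [->|->] : wt (Ph a) b = 0 \/ wt (Om a) b = 1 by rewrite /=; case: (b a).1; [left|right].
      by ring.
    by field.
  rewrite ?(negbTE ac) wt_Om_other; last by rewrite /= eq_sym.
  by rewrite (@sub_comm (Om a) (Ph c)) //; ring.
- rewrite wt_subOm; case: (eqVneq a c) => [<-|ac].
    rewrite ?eqxx.
    have -> : wt (Om a) (sub (Ps a) b) = 1 by rewrite /= updB_at.
    have -> : sub (Om a) (sub (Ps a) b) = sub (Ps a) (sub (Om a) b).
      by rewrite /= !updB_at !updB_same.
    have [->|->] : wt (Ps a) b = 0 \/ wt (Om a) b = q^-1 by rewrite /=; case: (b a).1; [right|left].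
      by ring.
    by ring.
  rewrite ?(negbTE ac) wt_Om_other; last by rewrite /= eq_sym.
  by rewrite (@sub_comm (Om a) (Ps c)) //; ring.
- case: (eqVneq a c) => [<-|ac].
    have -> : wt (Ph a) (sub (Ph a) b) = 0 by rewrite /= updB_at.
    by ring.
  by rewrite (@sub_comm (Ph c) (Ph a)) 1?eq_sym // (@anti (Ph a) (Ph c)) //; ring.
- case: (eqVneq a c) => [<-|ac].
    have -> : wt (Ps a) (sub (Ps a) b) = 0 by rewrite /= updB_at.
    by ring.
  by rewrite (@sub_comm (Ps c) (Ps a)) 1?eq_sym // (@anti (Ps a) (Ps c)) //; ring.
- have -> : wt (Ps a) (sub (Ph a) b) = sg b a by rewrite /= updB_at sg_upd_ge ?ltnn.
  have -> : wt (Ph a) (sub (Ps a) b) = sg b a by rewrite /= updB_at sg_upd_ge ?ltnn.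
  have -> : sub (Ps a) (sub (Ph a) b) = updB b a (false, (b a).2) by rewrite /= updB_at updB_same.
  have -> : sub (Ph a) (sub (Ps a) b) = updB b a (true, (b a).2) by rewrite /= updB_at updB_same.
  rewrite /=; case hb: (b a).1; rewrite (updB_self hb) sg_sq; ring.
- have -> : wt (Ps a) (sub (Ph a) b) = sg b a by rewrite /= updB_at sg_upd_ge ?ltnn.
  have -> : wt (Ph a) (sub (Ps a) b) = sg b a by rewrite /= updB_at sg_upd_ge ?ltnn.
  have -> : sub (Ps a) (sub (Ph a) b) = updB b a (false, (b a).2) by rewrite /= updB_at updB_same.
  have -> : sub (Ph a) (sub (Ps a) b) = updB b a (true, (b a).2) by rewrite /= updB_at updB_same.
  rewrite /actw /Omp; have [s1 w1] := Om_pow a m b.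
  rewrite s1 w1 shiftm -surjective_pairing updB_id.
  rewrite /=; case hb: (b a).1; rewrite (updB_self hb) ?expr1n ?exprVn sg_sq; ring.
- by rewrite (@sub_comm (Ps c) (Ph a)) 1?eq_sym // (@anti (Ph a) (Ps c)) //; ring.
Qed.

Definition tau (y : bool * bool * 'I_m) (t : bool * 'I_m) : bool * 'I_m :=
  (if y.1.2 then false else if y.1.1 then true else t.1, shift t.2 y.2).
Definition valid (y : bool * bool * 'I_m) (t : bool * 'I_m) : bool :=
  (y.1.1 ==> ~~ t.1) && (y.1.2 ==> (y.1.1 || t.1)).

Lemma pre_sub a (p d : bool) b :
  subw (nseq p (Ph a) ++ nseq d (Ps a)) b =
    updB b a (if d then false else if p then true else (b a).1, (b a).2) /\
  (wtw (nseq p (Ph a) ++ nseq d (Ps a)) b != 0) = (p ==> ~~ (b a).1) && (d ==> (p || (b a).1)).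
Proof.
case: p; case: d => /=.
- rewrite updB_at updB_same mulr1 sg_upd_ge ?ltnn //; split => //.
  by case: (b a).1; rewrite ?mul0r ?eqxx //= mulf_neq0 ?sg_neq0.
- rewrite mulr1; split => //.
  by case: (b a).1; rewrite ?eqxx //= sg_neq0.
- rewrite mulr1; split => //.
  by case: (b a).1; rewrite ?eqxx //= sg_neq0.
- by rewrite -surjective_pairing updB_id oner_eq0.
Qed.

Lemma blk_sub a y b : subw (blk a y) b = updB b a (tau y (b a)) /\
  (wtw (blk a y) b != 0) = valid y (b a).
Proof.
case: y => [[p d] v]; rewrite /blk catA subw_cat wtw_cat.
have [e1 e2] := pre_sub a p d b.
rewrite e1; have [f1 f2] := Om_pow a v
  (updB b a (if d then false else if p then true else (b a).1, (b a).2)).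
rewrite /Omp f1 f2 updB_at updB_same; split => //.
rewrite mulf_eq0 negb_or e2 expf_neq0 ?andbT //.
by case: ifP => _; rewrite ?invr_neq0 ?oner_eq0.
Qed.

Lemma W_sub (i : pbw_index n m) (s : seq 'I_n) b : uniq s ->
  subw (flatten [seq blk c (i c) | c <- s]) b =
    [ffun c => if c \in s then tau (i c) (b c) else b c] /\
  (wtw (flatten [seq blk c (i c) | c <- s]) b != 0) = all (fun c => valid (i c) (b c)) s.
Proof.
elim: s b => [|c s IH] b /=.
  by move=> _; split; [apply/ffunP => x; rewrite ffunE | rewrite oner_eq0].
case/andP => cs us; rewrite subw_cat wtw_cat.
have [e1 e2] := blk_sub c (i c) b.
have [f1 f2] := IH (updB b c (tau (i c) (b c))) us.
rewrite e1 f1 mulf_eq0 negb_or e2 f2; split.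
  apply/ffunP => x; rewrite !ffunE in_cons.
  by case: eqP => [->|xc] /=; first by rewrite (negbTE cs).
congr (_ && _); apply: eq_in_all => x xs; rewrite ffunE.
by case: eqP => // exc; move: cs; rewrite -exc xs.
Qed.

Definition outB (i : pbw_index n m) : BB := [ffun a => (~~ (i a).1.1, Ordinal hm)].
Definition inB (i : pbw_index n m) : BB := [ffun a => (~~ (i a).1.2, (i a).2)].
Definition xin (i : pbw_index n m) : BB -> K := fun b => if b == inB i then 1 else 0.
Definition compat (y' y : bool * bool * 'I_m) :=
  (y'.2 == y.2) && ((y'.1 == y.1) || (y.1 == (true, true)) && (y'.1 == (false, false))).

Lemma shift0l (v : 'I_m) : shift (Ordinal hm) v = v.
Proof. by apply: val_inj => /=; rewrite add0n modn_small. Qed.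

Lemma W_pbw (i : pbw_index n m) b :
  subw (pbw_word i) b = [ffun c => tau (i c) (b c)] /\
  (wtw (pbw_word i) b != 0) = [forall c, valid (i c) (b c)].
Proof.
have [e1 e2] := W_sub i b (enum_uniq 'I_n).
rewrite pbw_wordE e1 e2; split.
  by apply/ffunP => c; rewrite !ffunE mem_enum.
apply/allP/forallP => h c; first by apply: h; rewrite mem_enum.
by move=> _; apply: h.
Qed.

Lemma T_nz (i' i : pbw_index n m) : actw (pbw_word i') (xin i) (outB i) != 0 ->
  forall a, compat (i' a) (i a).
Proof.
rewrite /actw mulf_eq0 negb_or => /andP [hw hx] a.
have [e1 e2] := W_pbw i' (outB i).
move: hw hx; rewrite e1 e2 /xin => /forallP /(_ a) hv.
case: ifP => [/eqP E _|]; last by rewrite eqxx.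
have := congr1 (fun f : BB => f a) E; move: hv; rewrite !ffunE.
case: (i' a) => [[p' d'] v']; case: (i a) => [[p d] v].
rewrite /tau /valid /compat /= shift0l => hv [] hs ->; rewrite eqxx /=.
by move: hv hs; case: p; case: d; case: p'; case: d'.
Qed.

Lemma T_self (i : pbw_index n m) : actw (pbw_word i) (xin i) (outB i) != 0.
Proof.
have [e1 e2] := W_pbw i (outB i).
rewrite /actw e1 /xin.
have -> : [ffun c => tau (i c) (outB i c)] = inB i.
  apply/ffunP => c; rewrite !ffunE /tau /= shift0l.
  by case: (i c) => [[[] []] v].
rewrite eqxx mulr1 e2; apply/forallP => c; rewrite ffunE /valid /=.
by case: (i c) => [[[] []] v].
Qed.

Definition cnt (i : pbw_index n m) := #|[set a | (i a).1 == (true, true)]|.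

Lemma compat_cnt (i' i : pbw_index n m) : (forall a, compat (i' a) (i a)) -> i' != i ->
  (cnt i' < cnt i)%N.
Proof.
move=> hc ne; apply: proper_card; rewrite properEneq; apply/andP; split; last first.
  apply/subsetP => a; rewrite !inE => /eqP h1.
  by move: (hc a); rewrite /compat h1 => /andP [_ /orP [/eqP <-|/andP [_ //]]].
apply: contra ne => /eqP E; apply/eqP/ffunP => a.
have := hc a; rewrite /compat => /andP [/eqP h2 h3].
rewrite [i' a]surjective_pairing [i a]surjective_pairing h2; congr (_, _).
case/orP: h3 => [/eqP //|/andP [/eqP h4 _]].
have : a \in [set a | (i a).1 == (true, true)] by rewrite inE h4.
by rewrite -E inE h4 => /eqP.
Qed.

Lemma indep (c : {ffun pbw_index n m -> K}) :
  (forall x b, ev (pbw_comb c) x b = 0) -> forall i, c i = 0.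
Proof.
move=> H.
have evE : forall x b, ev (pbw_comb c) x b =
    \sum_(i <- enum (pbw_index n m)) c i * actw (pbw_word i) x b.
  move=> x b; rewrite /pbw_comb ev_flatten big_map; apply: eq_bigr => i _.
  by rewrite ev_scale ev_mono.
suff: forall k i, (cnt i < k)%N -> c i = 0 by move=> h i; apply: (h (cnt i).+1).
elim=> // k IH i hi.
have := H (xin i) (outB i); rewrite evE (bigD1_seq i) ?mem_enum ?enum_uniq //=.
rewrite big1_seq ?addr0.
  by move/eqP; rewrite mulf_eq0 (negbTE (T_self i)) orbF => /eqP.
move=> i' /andP [ne _].
case: (eqVneq (actw (pbw_word i') (xin i) (outB i)) 0) => [->|nz]; first by rewrite mulr0.
have := compat_cnt (T_nz nz) ne => lt.
by rewrite IH ?mul0r // (leq_trans lt).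
Qed.

End Rep.

Theorem theorem5p2 (K : fieldType) (hchar : (2%:R : K) != 0)
  (q : K) (hq : q != 0) (n m : nat) (hn : (0 < n)%N) (hm : (0 < m)%N) :
  pbw_is_basis q n m.
Proof.
split.
  by move=> f; apply: spanning.
move=> c hc; apply: (@indep K q n m hq hm) => x b.
exact: (ev_ideal (@rel_ev K q n m hq hm) hc).
Qed.
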